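(* Let $\mathsf{\Sigma}\in\mathbb{R}^{N\times N_S}$ and $\mathsf{\Lambda}\in\mathbb{R}^{N\times N_L}$ be the Star-to-RWG and Loop-to-RWG matrices of a triangular surface mesh (so that $\mathsf{\Sigma}^{\mathrm T}\mathsf{\Lambda}=\mathsf{0}$), with $\mathsf{P}^\Sigma=\mathsf{\Sigma}(\mathsf{\Sigma}^{\mathrm T}\mathsf{\Sigma})^+\mathsf{\Sigma}^{\mathrm T}$, $\mathbb{P}^\Lambda=\mathsf{\Lambda}(\mathsf{\Lambda}^{\mathrm T}\mathsf{\Lambda})^+\mathsf{\Lambda}^{\mathrm T}$, and quasi-Helmholtz Laplacian filters $\mathsf{P}_n^\Sigma=\mathsf{\Sigma}((\mathsf{\Sigma}^{\mathrm T}\mathsf{\Sigma})_n)^+\mathsf{\Sigma}^{\mathrm T}$, $\mathbb{P}_n^\Lambda=\mathsf{\Lambda}((\mathsf{\Lambda}^{\mathrm T}\mathsf{\Lambda})_n)^+\mathsf{\Lambda}^{\mathrm T}$, $\mathsf{P}_n^{\Lambda H}=\mathbb{P}_n^\Lambda+\mathsf{I}-\mathsf{P}^\Sigma-\mathbb{P}^\Lambda$, $\mathbb{P}_n^{\Sigma H}=\mathsf{P}_n^\Sigma+\mathsf{I}-\mathbb{P}^\Lambda-\mathsf{P}^\Sigma$. Then for all integers $1\le m<n<p<q\le N_S$, $$(\mathsf{P}_m^\Sigma-\mathsf{P}_n^\Sigma)(\mathsf{P}_p^\Sigma-\mathsf{P}_q^\Sigma)=\mathsf{0},\qquad (\mathbb{P}_m^{\Sigma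 H}-\mathbb{P}_n^{\Sigma H})(\mathbb{P}_p^{\Sigma H}-\mathbb{P}_q^{\Sigma H})=\mathsf{0},$$ and for all integers $1\le m<n<p<q\le N_L$, $$(\mathbb{P}_m^\Lambda-\mathbb{P}_n^\Lambda)(\mathbb{P}_p^\Lambda-\mathbb{P}_q^\Lambda)=\mathsf{0},\qquad (\mathsf{P}_m^{\Lambda H}-\mathsf{P}_n^{\Lambda H})(\mathsf{P}_p^{\Lambda H}-\mathsf{P}_q^{\Lambda H})=\mathsf{0}.$$
   Context: Consider a closed triangulated surface with $N$ edges, $N_S$ triangles and $N_L$ vertices; $\mathsf{I}$ is the $N\times N$ identity. Each edge $m$ is shared by two triangles $c_m^+$, $c_m^-$. $[\mathsf{\Sigma}]_{mn}=1$ if cell $n$ is $c_m^+$, $-1$ if cell $n$ is $c_m^-$, $0$ otherwise. $[\mathsf{\Lambda}]_{mn}=\pm1$ when vertex $n$ is an endpoint of edge $m$ (opposite signs for the two endpoints, fixed by the orientation convention of the RWG functions), $0$ otherwise; with this convention $\mathsf{\Sigma}^{\mathrm T}\mathsf{\Lambda}=\mathsf{0}$. $^+$ denotes the Moore–Penrose pseudo-inverse. For $\mathsf{X}\in\{\mathsf{\Sigma},\mathsf{\Lambda}\}$ with $N_x$ columns, fix an SVD $\mathsf{X}=\mathsf{U}_X\mathsf{S}_X\mathsf{V}_X^{\mathrm T}$ with $\mathsf{V}_X$ orthogonal $N_x\times N_x$ and singular values $\sigma_{X,1}\ge\dots\ge\sigma_{X,N_x}\ge0$, so $\mathsf{X}^{\mathrm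 T}\mathsf{X}=\mathsf{V}_X\mathrm{diag}(\sigma_{X,i}^2)\mathsf{V}_X^{\mathrm T}$. For $1\le n\le N_x$, $\mathsf{L}_{X,n}$ is diagonal with $[\mathsf{L}_{X,n}]_{ii}=\sigma_{X,i}$ if $i>N_x-n$ and $0$ otherwise, and $(\mathsf{X}^{\mathrm T}\mathsf{X})_n=\mathsf{V}_X\mathsf{L}_{X,n}^2\mathsf{V}_X^{\mathrm T}$. *)

(* Defs.v *)
From HB Require Import structures.
From mathcomp Require Import all_boot all_order all_algebra.
From mathcomp Require Import reals.
From Stdlib Require Import ClassicalEpsilon.
Set Implicit Arguments. Unset Strict Implicit. Unset Printing Implicit Defensive.
Import Order.TTheory GRing.Theory Num.Theory.
Local Open Scope ring_scope.

Section Defs.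
Variable R : realType.

Definition is_MP_pinv (m n : nat) (A : 'M[R]_(m, n)) (B : 'M[R]_(n, m)) : Prop :=
  [/\ A *m B *m A = A, B *m A *m B = B,
      (A *m B)^T = A *m B & (B *m A)^T = B *m A].

(* The Moore--Penrose pseudo-inverse A^+ (it exists and is unique, so the
   choice below picks exactly it). *)
Definition mp_pinv (m n : nat) (A : 'M[R]_(m, n)) : 'M[R]_(n, m) :=
  epsilon (inhabits 0) (is_MP_pinv A).

Definition star_mx (N NS : nat) (cp cm : 'I_N -> 'I_NS) : 'M[R]_(N, NS) :=
  \matrix_(e < N, c < NS)
     (if c == cp e then 1 else if c == cm e then -1 else 0).

(* Loop-to-RWG matrix: edge e has endpoints va e (sign +1) and vb e (sign -1),
   the labelling of the endpoints encoding the RWG orientation convention. *)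
Definition loop_mx (N NL : nat) (va vb : 'I_N -> 'I_NL) : 'M[R]_(N, NL) :=
  \matrix_(e < N, v < NL)
     (if v == va e then 1 else if v == vb e then -1 else 0).

Definition svd_data (N Nx : nat) (X : 'M[R]_(N, Nx)) (V : 'M[R]_Nx)
    (sigma : 'I_Nx -> R) : Prop :=
  [/\ V^T *m V = 1%:M,
      (forall i, 0 <= sigma i),
      (forall i j : 'I_Nx, (i <= j)%N -> sigma j <= sigma i) &
      X^T *m X = V *m diag_mx (\row_i (sigma i ^+ 2)) *m V^T].

(* L_{X,n}: diagonal, [L]_{ii} = sigma_i if i > Nx - n (1-indexed),
   i.e. Nx - n <= i for 0-indexed i. *)
Definition Lmx (Nx : nat) (sigma : 'I_Nx -> R) (n : nat) : 'M[R]_Nx :=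
  diag_mx (\row_(i < Nx) (if (Nx - n <= i)%N then sigma i else 0)).

Definition gram_trunc (Nx : nat) (V : 'M[R]_Nx) (sigma : 'I_Nx -> R) (n : nat)
  : 'M[R]_Nx := V *m (Lmx sigma n *m Lmx sigma n) *m V^T.

Definition proj_full (N Nx : nat) (X : 'M[R]_(N, Nx)) : 'M[R]_N :=
  X *m mp_pinv (X^T *m X) *m X^T.

Definition proj_filt (N Nx : nat) (X : 'M[R]_(N, Nx)) (V : 'M[R]_Nx)
    (sigma : 'I_Nx -> R) (n : nat) : 'M[R]_N :=
  X *m mp_pinv (gram_trunc V sigma n) *m X^T.

End Defs.

(* Main.v *)
Require Import Defs.
From HB Require Import structures.
From mathcomp Require Import all_boot all_order all_algebra.
From mathcomp Require Import reals zify.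
From Stdlib Require Import ClassicalEpsilon.
Import Order.TTheory GRing.Theory Num.Theory.
Local Open Scope ring_scope.
Lemma mp_unique (R : realType) m n (A : 'M[R]_(m, n)) B C :
  is_MP_pinv A B -> is_MP_pinv A C -> B = C.
Proof.
case=> B1 B2 B3 B4 [C1 C2 C3 C4].
have L1 : A^T = A^T *m A *m C.
  by rewrite -{1}C1 trmx_mul C3 mulmxA.
have L2 : A^T = B *m A *m A^T.
  by rewrite -{1}B1 -[A *m B *m A]mulmxA trmx_mul B4.
have eB : B = B *m A *m C.
  transitivity (B *m (A *m B)^T); first by rewrite B3 mulmxA B2.
  rewrite trmx_mul L1 !mulmxA.
  by rewrite -[B *m B^T *m A^T]mulmxA -trmx_mul B3 mulmxA B2.
have eC : C = B *m A *m C.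
  transitivity ((C *m A)^T *m C); first by rewrite C4 C2.
  by rewrite trmx_mul L2 -!mulmxA [A^T *m (C^T *m C)]mulmxA -trmx_mul C4 C2.
by rewrite eB -eC.
Qed.

Lemma mp_pinvE (R : realType) m n (A : 'M[R]_(m, n)) B : is_MP_pinv A B -> mp_pinv A = B.
Proof.
move=> HB; symmetry; apply: (@mp_unique R m n A B) => //.
exact: (ClassicalEpsilon.epsilon_spec _ _ (ex_intro _ B HB)).
Qed.

Lemma pinv_orth_diag (R : realType) k (V : 'M[R]_k) (d : 'rV[R]_k) :
  V^T *m V = 1%:M ->
  mp_pinv (V *m diag_mx d *m V^T) = V *m diag_mx (\row_j (d 0 j)^-1) *m V^T.
Proof.
move=> HV.
have HX : forall p (X : 'M[R]_(p, k)), X *m V^T *m V = X.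
  by move=> p X; rewrite -mulmxA HV mulmx1.
have e1 : forall x : R, x * x^-1 * x = x.
  by move=> x; case: (eqVneq x 0) => [->|h]; [rewrite !mul0r | rewrite mulfV // mul1r].
have e2 : forall x : R, x^-1 * x * x^-1 = x^-1.
  by move=> x; have := e1 x^-1; rewrite invrK.
have M : forall a b : 'rV[R]_k, V *m diag_mx a *m V^T *m (V *m diag_mx b *m V^T)
    = V *m diag_mx (\row_j (a 0 j * b 0 j)) *m V^T.
  by move=> a b; rewrite !mulmxA HX -[V *m diag_mx a *m diag_mx b]mulmxA mulmx_diag.
have T : forall a : 'rV[R]_k, (V *m diag_mx a *m V^T)^T = V *m diag_mx a *m V^T.
  by move=> a; rewrite !trmx_mul trmxK tr_diag_mx mulmxA.
apply: mp_pinvE; split; rewrite ?M ?T ?M //.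
all: congr (_ *m diag_mx _ *m _); apply/rowP => j; rewrite !mxE.
- exact: e1.
- exact: e2.
Qed.

Lemma filt_orth (R : realType) N k (X : 'M[R]_(N,k)) V sigma m n p q :
  svd_data X V sigma -> (m <= n)%N -> (n < p)%N -> (p <= q)%N ->
  (proj_filt X V sigma m - proj_filt X V sigma n) *m
  (proj_filt X V sigma p - proj_filt X V sigma q) = 0.
Proof.
case=> HV _ _ HXX hmn hnp hpq.
pose l n := \row_(i<k) (if (k - n <= i)%N then sigma i else 0).
pose e n := \row_j ((l n 0 j * l n 0 j)^-1).
pose W := X *m V.
have PE : forall n, proj_filt X V sigma n = W *m diag_mx (e n) *m W^T.
  move=> n'; rewrite /proj_filt /gram_trunc /Lmx mulmx_diag pinv_orth_diag //.
  rewrite /W trmx_mul !mulmxA.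
  by congr (_ *m diag_mx _ *m _ *m _); apply/rowP => j; rewrite !mxE.
have WW : W^T *m W = diag_mx (\row_i (sigma i ^+ 2)).
  rewrite /W trmx_mul !mulmxA -[V^T *m X^T *m X]mulmxA HXX !mulmxA HV mul1mx.
  by rewrite -mulmxA HV mulmx1.
rewrite !PE -!mulmxBl -!mulmxBr -!linearB /=.
set D1 := diag_mx (e m - e n). set D2 := diag_mx (e p - e q).
have Z : D1 *m diag_mx (\row_i (sigma i ^+ 2)) *m D2 = 0.
  rewrite /D1 /D2 !mulmx_diag (_ : \row_j _ = 0) ?linear0 //; apply/rowP => i.
  rewrite !mxE.
  case: (leqP (k - n) i) => h.
    have h1 : (k - p <= i)%N by lia.
    have h2 : (k - q <= i)%N by lia.
    by rewrite h1 h2 subrr mulr0.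
  have h1 : (k - m <= i)%N = false by apply/negbTE; rewrite -ltnNge; lia.
  have h2 : (k - n <= i)%N = false by apply/negbTE; rewrite -ltnNge; lia.
  by rewrite h1 ?h2 subrr !mul0r.
transitivity (W *m (D1 *m (W^T *m W) *m D2) *m W^T); first by rewrite !mulmxA.
by rewrite WW Z mulmx0 mul0mx.
Qed.

Lemma zz (G : zmodType) (a b x y z : G) : (a + x - y - z) - (b + x - y - z) = a - b.
Proof.
have E : forall t : G, t + x - y - z = t + (x - y - z) by move=> t; rewrite !addrA.
by rewrite !E opprD addrACA subrr addr0.
Qed.

Theorem mainTheorem6 (R : realType) (N NS NL : nat)
    (cp cm : 'I_N -> 'I_NS) (va vb : 'I_N -> 'I_NL)
    (Hc : forall e, cp e != cm e) (Hv : forall e, va e != vb e)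
    (HSL : (star_mx R cp cm)^T *m loop_mx R va vb = 0)
    (VS : 'M[R]_NS) (sS : 'I_NS -> R) (VL : 'M[R]_NL) (sL : 'I_NL -> R)
    (HsvdS : svd_data (star_mx R cp cm) VS sS)
    (HsvdL : svd_data (loop_mx R va vb) VL sL) :
  let Sig := star_mx R cp cm in
  let Lam := loop_mx R va vb in
  let PS := proj_full Sig in
  let PL := proj_full Lam in
  let PSn := fun n => proj_filt Sig VS sS n in
  let PLn := fun n => proj_filt Lam VL sL n in
  let PLHn := fun n => PLn n + 1%:M - PS - PL in
  let PSHn := fun n => PSn n + 1%:M - PL - PS in
  (forall m n p q : nat, [&& (1 <= m)%N, (m < n)%N, (n < p)%N, (p < q)%N & (q <= NS)%N] ->
     (PSn m - PSn n) *m (PSn p - PSn q) = 0 /\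
     (PSHn m - PSHn n) *m (PSHn p - PSHn q) = 0) /\
  (forall m n p q : nat, [&& (1 <= m)%N, (m < n)%N, (n < p)%N, (p < q)%N & (q <= NL)%N] ->
     (PLn m - PLn n) *m (PLn p - PLn q) = 0 /\
     (PLHn m - PLHn n) *m (PLHn p - PLHn q) = 0).
Proof.
move=> Sig Lam PS PL PSn PLn PLHn PSHn.
have HS : forall m n p q, (m <= n)%N -> (n < p)%N -> (p <= q)%N ->
    (PSn m - PSn n) *m (PSn p - PSn q) = 0.
  by move=> m n p q a b c; exact: (@filt_orth R _ _ _ _ _ m n p q HsvdS a b c).
have HL : forall m n p q, (m <= n)%N -> (n < p)%N -> (p <= q)%N ->
    (PLn m - PLn n) *m (PLn p - PLn q) = 0.
  by move=> m n p q a b c; exact: (@filt_orth R _ _ _ _ _ m n p q HsvdL a b c).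
rewrite /PSHn /PLHn; clear PSHn PLHn; clearbody PSn PLn PS PL.
split=> m n p q /and5P [_ h2 h3 h4 _].
  by rewrite !zz; split; apply: HS => //; apply: ltnW.
by rewrite !zz; split; apply: HL => //; apply: ltnW.
Qed.
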